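(* Consider a scenario submodular cover instance: finite ground set $U$, monotone submodular $f:2^U\to\mathbb{Z}_{\ge 0}$ with $Q:=f(U)$, items $\mathbf{X}_1,\dots,\mathbf{X}_m$ with costs $c_e>0$ and explicit joint distribution with $s$ scenarios (scenario $\omega$ has probability $p_\omega>0$, and in it $\mathbf{X}_e$ realizes to $X_e(\omega)\in U$), where in every scenario the realizations of all items cover $f$. Given parameters $\delta,\varepsilon\in(0,1)$, the scenario submodular partial cover problem asks to probe items with realization $R\subseteq U$ until either (i) the number of scenarios compatible with the observed realizations is less than $\delta s$, or (ii) $f(R)>Q(1-\varepsilon)$. There is a non-adaptive algorithm for this problem with expected cost $O\!\left(\frac{1}{\delta}\left(\ln\frac{1}{\delta}+\ln\frac{1}{\varepsilon}\right)\right)$ times the expected cost of an optimal adaptive solution for the (full) scenario submodular cover problem.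
   Context: A scenario $\omega$ is compatible with the observed realizations if every probed item $\mathbf{X}_e$ has realized to $X_e(\omega)$. A non-adaptive algorithm fixes an ordering of all items before observing any realization and then probes items in this order until the stopping condition holds; its cost is the expected total cost of probed items. An adaptive solution for full cover chooses each next item based on all realizations observed so far and must reach $f(S)=Q$ with probability one; the optimal one has minimum expected cost. *)

(* Defs.v *)
From HB Require Import structures.
From mathcomp Require Import all_boot all_order all_algebra.
From mathcomp Require Import all_classical all_reals all_analysis.
Set Implicit Arguments. Unset Strict Implicit. Unset Printing Implicit Defensive.
Import Order.TTheory GRing.Theory Num.Theory.
Local Open Scope ring_scope.

Section ScenarioSubmodularCover.
Variables (R : realType) (U : finType) (m s : nat).
Variables (f : {set U} -> nat) (c : 'I_m -> R) (p : 'I_s -> R)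
          (X : 'I_s -> 'I_m -> U).

Definition monotone_setfun := forall A B : {set U}, A \subset B -> (f A <= f B)%N.
Definition submodular_setfun :=
  forall A B : {set U}, (f (A :|: B) + f (A :&: B) <= f A + f B)%N.

Definition Qval : nat := f [set: U].

Definition scenarios_cover := forall w : 'I_s, f [set X w e | e : 'I_m] = Qval.

Section NonAdaptive.
Variables (sigma : 'I_m -> 'I_m) (delta eps : R).

Definition na_real (w : 'I_s) (k : nat) : {set U} :=
  [set X w (sigma i) | i : 'I_m & (i < k)%N].

Definition na_compat (w : 'I_s) (k : nat) : {set 'I_s} :=
  [set w' : 'I_s | [forall i : 'I_m, (i < k)%N ==> (X w' (sigma i) == X w (sigma i))]].

Definition na_stop (w : 'I_s) (k : nat) : bool :=
  ((#|na_compat w k|)%:R < delta * s%:R) || ((Qval%:R) * (1 - eps) < (f (na_real w k))%:R).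

(* number of items probed: first k (<= m) where the stopping condition holds
   (m if it never holds, i.e. all items are probed) *)
Definition na_stoptime (w : 'I_s) : nat := find (na_stop w) (iota 0 m).

Definition na_cost (w : 'I_s) : R := \sum_(i < m | (i < na_stoptime w)%N) c (sigma i).

Definition na_expected_cost : R := \sum_(w < s) p w * na_cost w.
End NonAdaptive.

Definition history := seq ('I_m * U).
Definition policy := history -> 'I_m.

Fixpoint ad_hist (pi : policy) (w : 'I_s) (k : nat) : history :=
  match k with
  | 0 => [::]
  | k'.+1 => let h := ad_hist pi w k' in rcons h (pi h, X w (pi h))
  end.

Definition ad_real (pi : policy) (w : 'I_s) (k : nat) : {set U} :=
  [set u | u \in map snd (ad_hist pi w k)].

Definition ad_cost (pi : policy) (w : 'I_s) (k : nat) : R :=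
  \sum_(e <- map fst (ad_hist pi w k)) c e.

(* tau w is the first time the policy reaches f(S) = Q in scenario w;
   existence of such tau for every scenario = full cover with probability one *)
Definition full_cover_stoptime (pi : policy) (tau : 'I_s -> nat) :=
  forall w : 'I_s, f (ad_real pi w (tau w)) = Qval /\
    (forall k, (k < tau w)%N -> f (ad_real pi w k) <> Qval).

Definition ad_expected_cost (pi : policy) (tau : 'I_s -> nat) : R :=
  \sum_(w < s) p w * ad_cost pi w (tau w).
End ScenarioSubmodularCover.

(* Main.v *)
Require Import Defs.
From HB Require Import structures.
From mathcomp Require Import all_boot all_order all_algebra.
From mathcomp Require Import all_classical all_reals all_analysis.
Import Order.TTheory GRing.Theory Num.Theory.
Local Open Scope ring_scope.

Section Proof.
Variables (R : realType) (U : finType) (m s : nat) (f : {set U} -> nat)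
  (c : 'I_m -> R) (p : 'I_s -> R) (X : 'I_s -> 'I_m -> U) (delta eps : R).
Variables (pi : policy U m) (tau : 'I_s -> nat).
Hypothesis fmono : monotone_setfun f.
Hypothesis Qpos : (0 < Qval f)%N.
Hypothesis cpos : forall e, 0 < c e.
Hypothesis Htau : full_cover_stoptime f X pi tau.
Hypothesis Hdelta : 0 < delta < 1.
Hypothesis Heps : 0 < eps < 1.

Local Notation hist := (ad_hist X pi).
Local Notation acost := (ad_cost c X pi).

Lemma acostS w n : acost w n.+1 = acost w n + c (pi (hist w n)).
Proof. by rewrite /ad_cost /= map_rcons big_rcons /=. Qed.

Lemma acost0 w : acost w 0 = 0.
Proof. by rewrite /ad_cost /= big_nil. Qed.

Lemma acost_ge0 w n : 0 <= acost w n.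
Proof.
elim: n => [|n IH]; first by rewrite acost0.
by rewrite acostS addr_ge0 // ltW.
Qed.

Lemma acost_mono w n1 n2 : (n1 <= n2)%N -> acost w n1 <= acost w n2.
Proof.
elim: n2 => [|n2 IH]; first by rewrite leqn0 => /eqP ->.
rewrite leq_eqVlt => /orP [/eqP -> //|]; rewrite ltnS => /IH h.
by rewrite acostS (le_trans h) // lerDl ltW.
Qed.

Lemma hist_mem w n x : x \in hist w n ->
  exists2 j, (j < n)%N & x = (pi (hist w j), X w (pi (hist w j))).
Proof.
elim: n => [|n IH] //=.
rewrite mem_rcons inE => /orP [/eqP ->|/IH [j jn ->]]; first by exists n.
by exists j => //; rewrite ltnS ltnW.
Qed.

Lemma hist_eq_acost w w' n : hist w n = hist w' n -> acost w n.+1 = acost w' n.+1.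
Proof. by move=> h; rewrite !acostS h /ad_cost h. Qed.

Definition cls w j := [set w' | hist w' j == hist w j].
Definition large w j := delta * s%:R <= (#|cls w j|)%:R.
Definition D w := find (fun j => ~~ large w j) (iota 0 (tau w)).

Lemma D_le w : (D w <= tau w)%N.
Proof. by rewrite /D -[X in (_ <= X)%N](size_iota 0) find_size. Qed.

Lemma large_before w j : (j < D w)%N -> large w j.
Proof.
move=> jD; have := before_find 0 jD; rewrite nth_iota ?add0n.
  by move/negbFE.
exact: leq_trans jD (D_le w).
Qed.

Lemma small_at w : (D w < tau w)%N -> ~~ large w (D w).
Proof.
move=> h; have hs : has (fun j => ~~ large w j) (iota 0 (tau w)).
  by rewrite has_find size_iota.
by have := nth_find 0 hs; rewrite -/(D w) nth_iota // add0n.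
Qed.

Lemma na_stoptime_le sigma w k : (k <= m)%N -> na_stop f X sigma delta eps w k ->
  (na_stoptime f X sigma delta eps w <= k)%N.
Proof.
move=> km hk; rewrite leqNgt; apply/negP => hlt.
have := before_find 0 hlt.
have km' : (k < m)%N.
  by apply: leq_trans hlt _; rewrite -[X in (_ <= X)%N](size_iota 0) find_size.
by rewrite nth_iota // add0n hk.
Qed.


Section Stop.
Variable sigma : 'I_m -> 'I_m.
Variables (w : 'I_s) (k : nat).
Hypothesis Hprob : forall j, (j < D w)%N ->
  exists i : 'I_m, (i < k)%N && (sigma i == pi (hist w j)).

Lemma compat_hist w' : w' \in na_compat X sigma w k ->
  forall j, (j <= D w)%N -> hist w' j = hist w j.
Proof.
rewrite inE => /forallP hc; elim => [|j IH] // hj.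
have e := IH (ltnW hj).
have [i /andP [ik /eqP si]] := Hprob _ hj.
have := hc i; rewrite ik /= si => /eqP ex.
change (rcons (hist w' j) (pi (hist w' j), X w' (pi (hist w' j))) =
        rcons (hist w j) (pi (hist w j), X w (pi (hist w j)))).
by rewrite e ex.
Qed.

Lemma stop_ok : na_stop f X sigma delta eps w k.
Proof.
rewrite /na_stop; have [hlt|hge] := ltnP (D w) (tau w).
  apply/orP; left.
  have hs := small_at w hlt.
  have sub : na_compat X sigma w k \subset cls w (D w).
    apply/fintype.subsetP => w' hw'; rewrite inE; apply/eqP.
    exact: compat_hist hw' _ (leqnn _).
  apply: (le_lt_trans (y := (#|cls w (D w)|)%:R)).
    by rewrite ler_nat subset_leq_card.
  by rewrite ltNge.
apply/orP; right.
have hD : D w = tau w by apply/eqP; rewrite eqn_leq D_le hge.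
have [hQ _] := Htau w.
have sub : ad_real X pi w (tau w) \subset na_real X sigma w k.
  apply/fintype.subsetP => u; rewrite inE => /mapP [x /hist_mem [j jt ->] ->] /=.
  rewrite -hD in jt; have [i /andP [ik /eqP si]] := Hprob _ jt.
  by apply/imsetP; exists i; rewrite ?inE // si.
have := fmono _ _ sub; rewrite hQ => hle.
apply: (lt_le_trans (y := (Qval f)%:R)); last by rewrite ler_nat.
have Q0 : (0 : R) < (Qval f)%:R by rewrite ltr0n.
case/andP: Heps => e0 e1.
by rewrite -[X in _ < X]mulr1 ltr_pM2l // ltrBlDr ltrDl.
Qed.
End Stop.


Lemma acost_sum w n : acost w n = \sum_(j < n) c (pi (hist w j)).
Proof.
elim: n => [|n IH]; first by rewrite acost0 big_ord0.
by rewrite acostS big_ord_recr /= IH.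
Qed.

Lemma prefix_bound w T n : 0 <= T ->
  \sum_(j < n | acost w j.+1 <= T) c (pi (hist w j)) <= T.
Proof.
move=> T0; elim: n => [|n IH]; first by rewrite big_ord0.
rewrite big_mkcond big_ord_recr /=.
rewrite big_mkcond /= in IH.
case: ifP => hn; last by rewrite addr0.
rewrite (eq_bigr (fun j : 'I_n => c (pi (hist w j)))).
  by rewrite -acost_sum -acostS.
move=> j _; rewrite ifT //; apply: le_trans hn; apply: acost_mono.
by rewrite ltnS ltnW.
Qed.

Definition M := (\max_(w < s) tau w).+1.
Definition H := 1 + \sum_(w < s) acost w (tau w).
Definition key (e : 'I_m) : R :=
  \big[Order.min/H]_(x : 'I_s * 'I_M | (x.2 < D x.1)%N && (pi (hist x.1 x.2) == e))
     acost x.1 (x.2).+1.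

Lemma tau_M w : (tau w < M)%N.
Proof. by rewrite ltnS (leq_bigmax w). Qed.

Lemma key_le w j : (j < D w)%N -> key (pi (hist w j)) <= acost w j.+1.
Proof.
move=> jD; have jM : (j < M)%N := leq_ltn_trans (leq_trans (ltnW jD) (D_le w)) (tau_M w).
rewrite /key; apply: (@bigmin_le_cond _ _ _ H (w, Ordinal jM)) => /=.
by rewrite jD eqxx.
Qed.

Lemma key_wit e T : T < H -> key e <= T ->
  exists w, exists j : 'I_M, [/\ (j < D w)%N, pi (hist w j) = e & acost w j.+1 <= T].
Proof.
move=> TH /bigmin_leP [hH|[[w j] /= /andP [jD /eqP he] hT]].
  by move: (lt_le_trans TH hH); rewrite ltxx.
by exists w, j.
Qed.

Definition Nset (T : R) (e : 'I_m) : {set 'I_s} :=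
  [set w' | [exists j : 'I_M, (acost w' j.+1 <= T) && (pi (hist w' j) == e)]].

Lemma inner_bound T w' : 0 <= T ->
  \sum_(e | w' \in Nset T e) c e <= T.
Proof.
move=> T0; apply: le_trans (prefix_bound w' T M T0).
rewrite (partition_big (fun j : 'I_M => pi (hist w' j)) xpredT) //=.
rewrite big_mkcond /=; apply: ler_sum => e _.
case: ifP => he; last by apply: sumr_ge0 => j _; exact: ltW.
move: he; rewrite inE => /existsP [j /andP [hj /eqP hje]].
rewrite (bigD1 j) /=; last by rewrite hj hje eqxx.
by rewrite hje lerDl sumr_ge0 // => i _; exact: ltW.
Qed.

Lemma bound T : 0 <= T -> T < H ->
  (\sum_(e | key e <= T) c e) * (delta * s%:R) <= s%:R * T.
Proof.
move=> T0 TH; rewrite mulr_suml.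
apply: (le_trans (y := \sum_e c e * (#|Nset T e|)%:R)).
  rewrite [X in _ <= X](bigID (fun e => key e <= T)) /= -[X in X <= _]addr0.
  apply: lerD; last by apply: sumr_ge0 => e _; rewrite mulr_ge0 // ltW.
  apply: ler_sum => e he; rewrite ler_pM2l //.
  have [w [j [jD hje hT]]] := key_wit e T TH he.
  apply: le_trans (large_before w j jD) _; rewrite ler_nat subset_leq_card //.
  apply/fintype.subsetP => w'; rewrite !inE => /eqP hh; apply/existsP; exists j.
  by rewrite (hist_eq_acost _ _ _ hh) hT hh hje eqxx.
rewrite (eq_bigr (fun e => \sum_(w' in Nset T e) c e)); last first.
  by move=> e _; rewrite sumr_const mulr_natr.
rewrite (exchange_big_dep xpredT) //=.
apply: (le_trans (y := \sum_(w' < s) T)); last by rewrite sumr_const card_ord mulr_natl.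
by apply: ler_sum => w' _; exact: inner_bound.
Qed.

Definition s0 := sort (fun a b : 'I_m => key a <= key b) (enum 'I_m).
Lemma size_s0 : size s0 = m.
Proof. by rewrite size_sort size_enum_ord. Qed.
Lemma uniq_s0 : uniq s0.
Proof. by rewrite sort_uniq enum_uniq. Qed.
Lemma mem_s0 e : e \in s0.
Proof. by rewrite mem_sort mem_enum. Qed.
Lemma sorted_s0 : sorted (fun a b : 'I_m => key a <= key b) s0.
Proof. by apply: sort_sorted => a b; exact: le_total. Qed.

Definition sig0 (i : 'I_m) : 'I_m := nth i s0 i.

Lemma sig0_inj : injective sig0.
Proof.
move=> i j; rewrite /sig0 (set_nth_default i j) ?size_s0 // => /eqP.
by rewrite nth_uniq ?size_s0 ?uniq_s0 // => /eqP /val_inj.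
Qed.

Lemma scen_bound w : na_cost f c X sig0 delta eps w <= delta^-1 * acost w (tau w).
Proof.
set T := acost w (D w).
set k := find (fun e => T < key e) s0.
have km : (k <= m)%N by rewrite -size_s0 find_size.
have Hprob : forall j, (j < D w)%N ->
    exists i : 'I_m, (i < k)%N && (sig0 i == pi (hist w j)).
  move=> j jD; set e := pi (hist w j).
  have keT : key e <= T := le_trans (key_le w j jD) (acost_mono w _ _ jD).
  have idxm : (index e s0 < m)%N.
    by have := index_mem e s0; rewrite mem_s0 size_s0.
  exists (Ordinal idxm); rewrite /sig0 /= nth_index ?mem_s0 // eqxx andbT.
  rewrite ltnNge; apply/negP => hki.
  have hks : (k < size s0)%N by apply: leq_ltn_trans hki _; rewrite size_s0.
  have hhas : has (fun e => T < key e) s0 by rewrite has_find.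
  have h1 := nth_find e hhas; rewrite -/k in h1.
  have h2 : key (nth e s0 k) <= key (nth e s0 (index e s0)).
    apply: (sorted_leq_nth (leT := fun a b : 'I_m => key a <= key b)
      (fun y x z => @le_trans _ _ (key y) (key x) (key z)) (fun a => lexx (key a)) e sorted_s0).
    - by rewrite inE.
    - by rewrite inE size_s0.
    - by [].
  rewrite nth_index ?mem_s0 // in h2.
  by move: (lt_le_trans h1 (le_trans h2 keT)); rewrite ltxx.
have hstop := na_stoptime_le sig0 w k km (stop_ok sig0 w k Hprob).
have s0pos : (0 < s)%N by case: (w) => i /=; case: s => // ; rewrite ltn0.
have TH : T < H.
  have h1 : T <= acost w (tau w) := acost_mono w _ _ (D_le w).
  have h2 : acost w (tau w) <= \sum_(i < s) acost i (tau i).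
    rewrite (bigD1 w) //= lerDl; apply: sumr_ge0 => i _; exact: acost_ge0.
  by rewrite /H; apply: le_lt_trans (le_trans h1 h2) _; rewrite addrC ltrDl ltr01.
have T0 : 0 <= T by exact: acost_ge0.
apply: (le_trans (y := \sum_(i < m | (i < k)%N) c (sig0 i))).
  rewrite /na_cost big_mkcond [X in _ <= X]big_mkcond /=; apply: ler_sum => i _.
  case: ifP => hi; last by case: ifP => // _; exact: ltW.
  by rewrite ifT //; apply: leq_trans hi hstop.
apply: (le_trans (y := \sum_(e | key e <= T) c e)).
  rewrite [X in _ <= X](reindex_inj sig0_inj) /=.
  rewrite big_mkcond [X in _ <= X]big_mkcond /=; apply: ler_sum => i _.
  case: ifP => hi; last by case: ifP => // _; exact: ltW.
  rewrite ifT //; have := before_find i hi; rewrite -/k /sig0 => /negbT.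
  by rewrite -leNgt.
have hb := bound T T0 TH.
have dpos : 0 < delta by case/andP: Hdelta.
have spos : (0 : R) < s%:R by rewrite ltr0n.
apply: (le_trans (y := delta^-1 * T)); last first.
  apply: ler_wpM2l; [by rewrite invr_ge0 ltW | exact: (acost_mono w _ _ (D_le w))].
rewrite mulrC ler_pdivlMr //.
by rewrite -(ler_pM2r spos) -mulrA [T * _]mulrC.
Qed.

End Proof.

Theorem mainTheorem5 (R : realType) :
  exists C : R, 0 < C /\
  forall (U : finType) (m s : nat) (f : {set U} -> nat) (c : 'I_m -> R)
         (p : 'I_s -> R) (X : 'I_s -> 'I_m -> U) (delta eps : R),
    monotone_setfun f -> submodular_setfun f ->
    (0 < Qval f)%N ->
    (forall e, 0 < c e) ->
    (forall w, 0 < p w) -> \sum_(w < s) p w = 1 ->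
    scenarios_cover f X ->
    0 < delta < 1 -> 0 < eps < 1 ->
    exists sigma : 'I_m -> 'I_m, bijective sigma /\
      forall (pi : policy U m) (tau : 'I_s -> nat),
        full_cover_stoptime f X pi tau ->
        na_expected_cost f c p X sigma delta eps <=
          C * (delta^-1 * (1 + ln (delta^-1) + ln (eps^-1)))
            * ad_expected_cost c p X pi tau.
Proof.
exists 1; split; first exact: ltr01.
move=> U m s f c p X delta eps fmono _ Qpos cpos ppos _ _ Hdelta Heps.
pose F := fun g : {ffun 'I_m -> 'I_m} => na_expected_cost f c p X g delta eps.
have inj0 : injectiveb [ffun i : 'I_m => i].
  by apply/injectiveP => i j; rewrite !ffunE.
case: (@arg_minP _ _ _ [ffun i : 'I_m => i] (fun g => injectiveb g) F inj0).
move=> g /injectiveP gi gmin.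
exists g; split; first exact: injF_bij gi.
move=> pi tau Htau.
set g0 := [ffun i => @sig0 R U m s c X delta pi tau i].
have ig0 : injectiveb g0.
  apply/injectiveP => i j; rewrite !ffunE; exact: sig0_inj.
have h0 := gmin g0 ig0.
have E : (fun_of_fin g0) = @sig0 R U m s c X delta pi tau.
  by apply: funext => i; rewrite ffunE.
apply: (le_trans h0); rewrite /F E.
have dpos : 0 < delta by case/andP: Hdelta.
have AD0 : 0 <= ad_expected_cost c p X pi tau.
  apply: sumr_ge0 => w _; apply: mulr_ge0; first exact: ltW.
    apply: (big_ind (fun x : R => 0 <= x)) => //; [exact: addr_ge0 | move=> e _; exact: ltW].
apply: (le_trans (y := delta^-1 * ad_expected_cost c p X pi tau)).
  rewrite /na_expected_cost /ad_expected_cost mulr_sumr; apply: ler_sum => w _.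
  rewrite mulrCA; apply: ler_wpM2l; first exact: ltW.
  exact: (@scen_bound R U m s f c X delta eps pi tau fmono Qpos cpos Htau Hdelta Heps w).
rewrite mul1r -mulrA; apply: ler_wpM2l; first by rewrite invr_ge0 ltW.
apply: ler_peMl => //.
have L1 : 0 <= ln (delta^-1) by apply: ln_ge0; rewrite invf_ge1 // ltW //; case/andP: Hdelta.
have L2 : 0 <= ln (eps^-1).
  by case/andP: Heps => e0 e1; apply: ln_ge0; rewrite invf_ge1 // ltW.
by rewrite -addrA lerDl addr_ge0.
Qed.
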